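(* Let $M=4Z+3$ with $Z\ge1$ an integer, and let $\gamma\neq0$ and $J$ be real. Consider on the open chain of $M$ sites $$H=\sum_{m=1}^{M-1}\Big(J\, c_{m+1}^\dagger c_m\sigma_{m+1}^+ + \text{h.c.}\Big) - \sum_{m=1}^{M-1}\gamma\Big(c_{m+1}^\dagger c_m + \text{h.c.}\Big).$$ Then the subspace of states with exactly one fermion and spin on site $1$ equal to $|\uparrow\rangle$ contains at least $2^{3Z+1}$ linearly independent states $|\Psi\rangle$ satisfying $H^2|\Psi\rangle=(2\gamma^2+J^2)|\Psi\rangle$, each of which generates a two-dimensional Krylov subspace $\mathrm{span}\{|\Psi\rangle, H|\Psi\rangle\}$ (so the Hamiltonian has at least $2^{3Z+1}$ two-dimensional Krylov subspaces in this sector).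
   Context: Each site carries one spinless fermion mode ($c_m,c_m^\dagger$, canonical anticommutation relations) and one spin-$1/2$ with basis $|\uparrow\rangle=|1\rangle$, $|\downarrow\rangle=|0\rangle$ ($\sigma^z|1\rangle=|1\rangle$); $\sigma_m^+=|1\rangle\langle 0|$ acting on spin $m$ and $\sigma_m^-=(\sigma_m^+)^\dagger$. The Krylov subspace generated by $|\Psi\rangle$ is the span of $\{H^n|\Psi\rangle: n\ge 0\}$. *)

(* Defs.v *)
From HB Require Import structures.
From mathcomp Require Import all_boot all_order all_algebra.
Set Implicit Arguments. Unset Strict Implicit. Unset Printing Implicit Defensive.
Import Order.TTheory GRing.Theory Num.Theory.
Local Open Scope ring_scope.

(* Sites are indexed 0..M-1 (site m of the paper is index m-1).
   Fock basis of the chain: (fermion occupations, spin configuration),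
   with spin value true = |up> = |1>, false = |down> = |0>. *)
Notation basis M := ({ffun 'I_M -> bool} * {ffun 'I_M -> bool})%type.

Notation state M C := {ffun basis M -> C^o}.

Section Ops.
Variables (M : nat) (C : numClosedFieldType).

Definition setb (f : {ffun 'I_M -> bool}) (m : 'I_M) (v : bool) : {ffun 'I_M -> bool} :=
  [ffun k => if k == m then v else f k].

Definition jw_sign (n : {ffun 'I_M -> bool}) (m : 'I_M) : C :=
  (-1) ^+ #|[set k : 'I_M | (val k < val m)%N && n k]|.

(* fermion annihilation c_m:  c_m |n> = sign * [n_m] |n - e_m> *)
Definition cop (m : 'I_M) (psi : state M C) : state M C :=
  [ffun b : basis M => if ~~ b.1 m then jw_sign b.1 m * psi (setb b.1 m true, b.2) else 0].

Definition cdag (m : 'I_M) (psi : state M C) : state M C :=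
  [ffun b : basis M => if b.1 m then jw_sign b.1 m * psi (setb b.1 m false, b.2) else 0].

(* sigma_m^+ = |1><0| on spin m *)
Definition sigp (m : 'I_M) (psi : state M C) : state M C :=
  [ffun b : basis M => if b.2 m then psi (b.1, setb b.2 m false) else 0].

Definition sigm (m : 'I_M) (psi : state M C) : state M C :=
  [ffun b : basis M => if ~~ b.2 m then psi (b.1, setb b.2 m true) else 0].

(* H = sum_{m=1}^{M-1} ( J c_{m+1}^+ c_m s_{m+1}^+ + h.c. )
       - sum_{m=1}^{M-1} gamma ( c_{m+1}^+ c_m + h.c. ),
   with J, gamma real, so h.c. of the first term is J s_{m+1}^- c_m^+ c_{m+1}. *)
Definition Ham (J gamma : C) (psi : state M C) : state M C :=
  \sum_(a : 'I_M) \sum_(b : 'I_M | val b == (val a).+1)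
    (J *: (cdag b (cop a (sigp b psi)) + sigm b (cdag a (cop b psi)))
     - gamma *: (cdag b (cop a psi) + cdag a (cop b psi))).

Definition in_sector (psi : state M C) : Prop :=
  forall b : basis M, psi b != 0 ->
    #|[set k : 'I_M | b.1 k]| = 1%N /\ (forall k : 'I_M, val k = 0%N -> b.2 k).

Definition lin_indep (k : nat) (v : 'I_k -> state M C) : Prop :=
  forall a : 'I_k -> C, \sum_(i < k) a i *: v i = 0 -> forall i, a i = 0.

Definition krylov (H : state M C -> state M C) (psi : state M C) (w : state M C) : Prop :=
  exists (N : nat) (a : 'I_N -> C), w = \sum_(n < N) a n *: iter n H psi.

Definition krylov_dim2 (H : state M C -> state M C) (psi : state M C) : Prop :=
  exists u v : state M C,
    [/\ krylov H psi u, krylov H psi v,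
        (forall a b : C, a *: u + b *: v = 0 -> a = 0 /\ b = 0)
      & forall w, krylov H psi w -> exists a b : C, w = a *: u + b *: v].

End Ops.

(* Main.v *)
Require Import Defs.
From HB Require Import structures.
From mathcomp Require Import all_boot all_order all_algebra.
From mathcomp Require Import zify ring.
Set Implicit Arguments. Unset Strict Implicit. Unset Printing Implicit Defensive.
Import Order.TTheory GRing.Theory Num.Theory.
Local Open Scope ring_scope.

Section Gen.
Variables (M : nat) (C : numClosedFieldType).
Local Notation st := (state M C).

Lemma copD m (x y : st) : cop m (x + y) = cop m x + cop m y.
Proof. by apply/ffunP => z; rewrite !ffunE; case: ifP => _; rewrite ?addr0 // mulrDr. Qed.
Lemma copZ m c (x : st) : cop m (c *: x) = c *: cop m x.
Proof. by apply/ffunP => z; rewrite !ffunE; case: ifP => _; rewrite ?scaler0 // scalerAr. Qed.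
Lemma cdagD m (x y : st) : cdag m (x + y) = cdag m x + cdag m y.
Proof. by apply/ffunP => z; rewrite !ffunE; case: ifP => _; rewrite ?addr0 // mulrDr. Qed.
Lemma cdagZ m c (x : st) : cdag m (c *: x) = c *: cdag m x.
Proof. by apply/ffunP => z; rewrite !ffunE; case: ifP => _; rewrite ?scaler0 // scalerAr. Qed.
Lemma sigpD m (x y : st) : sigp m (x + y) = sigp m x + sigp m y.
Proof. by apply/ffunP => z; rewrite !ffunE; case: ifP => _; rewrite ?addr0. Qed.
Lemma sigpZ m c (x : st) : sigp m (c *: x) = c *: sigp m x.
Proof. by apply/ffunP => z; rewrite !ffunE; case: ifP => _; rewrite ?scaler0. Qed.
Lemma sigmD m (x y : st) : sigm m (x + y) = sigm m x + sigm m y.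
Proof. by apply/ffunP => z; rewrite !ffunE; case: ifP => _; rewrite ?addr0. Qed.
Lemma sigmZ m c (x : st) : sigm m (c *: x) = c *: sigm m x.
Proof. by apply/ffunP => z; rewrite !ffunE; case: ifP => _; rewrite ?scaler0. Qed.

Lemma lin4 (J g : C) (a1 b1 a2 b2 a3 b3 a4 b4 : st) :
  J *: (a1 + b1 + (a2 + b2)) - g *: (a3 + b3 + (a4 + b4)) =
  (J *: (a1 + a2) - g *: (a3 + a4)) + (J *: (b1 + b2) - g *: (b3 + b4)).
Proof. by rewrite (addrACA a1) (addrACA a3) (scalerDr J) (scalerDr g) opprD addrACA. Qed.

Lemma HamD J g (x y : st) : Ham J g (x + y) = Ham J g x + Ham J g y.
Proof.
rewrite /Ham -big_split; apply: eq_bigr => a _; rewrite -big_split; apply: eq_bigr => b _.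
by rewrite !(sigpD, copD, cdagD, sigmD) lin4.
Qed.

Lemma HamZ J g c (x : st) : Ham J g (c *: x) = c *: Ham J g x.
Proof.
rewrite /Ham scaler_sumr; apply: eq_bigr => a _; rewrite scaler_sumr; apply: eq_bigr => b _.
rewrite !(sigpZ, copZ, cdagZ, sigmZ) -!scalerDr scalerBr !scalerA; congr (_ *: _ - _ *: _); apply: mulrC.
Qed.

Lemma Ham0 J g : Ham J g (0 : st) = 0.
Proof. by have := HamZ J g 0 (0 : st); rewrite !scale0r. Qed.

Lemma Ham_sum J g (I : Type) (r : seq I) (P : pred I) (F : I -> st) :
  Ham J g (\sum_(i <- r | P i) F i) = \sum_(i <- r | P i) Ham J g (F i).
Proof. exact: (big_morph _ (HamD J g) (Ham0 J g)). Qed.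


Definition delta (m : nat) : {ffun 'I_M -> bool} := [ffun k => val k == m].
Definition P (m : nat) (f : nat -> bool -> C) : st :=
  [ffun b : basis M => if b.1 == delta m then \prod_(j < M) f (val j) (b.2 j) else 0].
Definition upd (f : nat -> bool -> C) (j : nat) (v : bool -> C) :=
  fun j' => if j' == j then v else f j'.
Definition sp (v : bool -> C) : bool -> C := fun x => if x then v false else 0.
Definition sm (v : bool -> C) : bool -> C := fun x => if x then 0 else v true.

Lemma sigp_P (b : 'I_M) m f : sigp b (P m f) = P m (upd f b (sp (f b))).
Proof.
apply/ffunP => [[n s]]; rewrite !ffunE /=.
case: (n == delta m); last by case: ifP.
rewrite [RHS](bigD1 b) //= /upd eqxx /sp.
case: ifP => sb; last by rewrite mul0r.
rewrite (bigD1 b) //= /setb ffunE eqxx; congr (_ * _).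
apply: eq_bigr => j jb; rewrite ffunE (negbTE jb).
by have -> : (val j == val b) = false by rewrite val_eqE (negbTE jb).
Qed.

Lemma sigm_P (b : 'I_M) m f : sigm b (P m f) = P m (upd f b (sm (f b))).
Proof.
apply/ffunP => [[n s]]; rewrite !ffunE /=.
case: (n == delta m); last by case: ifP.
rewrite [RHS](bigD1 b) //= /upd eqxx /sm.
case sb: (s b) => /=; first by rewrite mul0r.
rewrite (bigD1 b) //= /setb ffunE eqxx; congr (_ * _).
apply: eq_bigr => j jb; rewrite ffunE (negbTE jb).
by have -> : (val j == val b) = false by rewrite val_eqE (negbTE jb).
Qed.

Lemma key (n : {ffun 'I_M -> bool}) (a b : 'I_M) m :
  [&& n b, ~~ (if a == b then false else n a) & setb (setb n b false) a true == delta m]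
  = (n == delta b) && (val a == m).
Proof.
apply/idP/idP.
- case/and3P => nb h2 /eqP h3.
  have am : val a == m.
    by have := congr1 (fun f : {ffun 'I_M -> bool} => f a) h3; rewrite /setb /delta !ffunE eqxx => <-.
  rewrite am andbT; apply/eqP/ffunP => k; rewrite /delta ffunE.
  have := congr1 (fun f : {ffun 'I_M -> bool} => f k) h3; rewrite /setb /delta !ffunE.
  move: h2.
  case: (eqVneq k b) => [-> | kb]; first by rewrite nb eqxx.
  rewrite val_eqE (negbTE kb).
  case: (eqVneq k a) => [ka | ka].
    by subst k; rewrite (negbTE kb) => /negbTE ->.
  move=> _ ->; move/eqP: am => <-; by rewrite val_eqE (negbTE ka).
- case/andP => /eqP -> /eqP am; rewrite /setb /delta !ffunE eqxx /=.
  apply/andP; split.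
    by rewrite -val_eqE; case: (val a == val b).
  apply/eqP; apply/ffunP => k; rewrite !ffunE -am.
  have -> : (val k == val a) = (k == a) by [].
  case: (eqVneq k a) => // ka; case: (eqVneq k b) => // kb. exact: negbTE.
Qed.

Lemma jw1 (n : {ffun 'I_M -> bool}) (m : 'I_M) : (forall k : 'I_M, (val k < val m)%N -> n k = false) ->
  jw_sign C n m = 1.
Proof.
move=> H; rewrite /jw_sign.
have -> : [set k : 'I_M | (val k < val m)%N && n k] = set0.
  by apply/setP => k; rewrite !inE; case: ltnP => // h; rewrite (H k h).
by rewrite cards0 expr0.
Qed.

Lemma cc_P (a b : 'I_M) m f :
  cdag b (cop a (P m f)) = if val a == m then P b f else 0.
Proof.
apply/ffunP => [[n s]]; rewrite !ffunE /=.
have K := key n a b m.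
case E: ((n == delta b) && (val a == m)).
- move: (E) K => ->; move/and3P => [h1 h2 h3]; rewrite h1 h2 h3 /=.
  move/andP: E => [/eqP En /eqP am]; rewrite am eqxx ffunE /= En eqxx.
  rewrite !jw1 ?mul1r //.
    by move=> k hk; rewrite /setb /delta !ffunE; case: ifP => // kb; exact: kb.
  by move=> k kb; rewrite /delta ffunE; apply/negbTE; rewrite neq_ltn kb.
- rewrite E in K.
  have -> : (if val a == m then P b f else 0) (n, s) = 0.
    case: ifP => am; last by rewrite ffunE. rewrite ffunE /=.
    by case: (n == delta b) E; rewrite am.
  case: ifP => h1; last by []; case: ifP => h2; last by rewrite mulr0.
  case: ifP => h3; last by rewrite !mulr0. by move: K; rewrite h1 h2 h3.
Qed.

Lemma sum_eqk (G : nat -> st) k :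
  \sum_(b : 'I_M | val b == k) G (val b) = if (k < M)%N then G k else 0.
Proof.
case: ltnP => h.
  by rewrite (big_pred1 (Ordinal h)).
rewrite big_pred0 // => b; apply/negbTE; rewrite neq_ltn (leq_trans (ltn_ord b) h).
by [].
Qed.

Lemma sigm0 (b : 'I_M) : sigm b (0 : st) = 0.
Proof. by apply/ffunP => z; rewrite !ffunE; case: ifP. Qed.

Lemma split_if (J g : C) (c1 c2 : bool) (x1 x2 y1 y2 : st) :
  J *: ((if c1 then x1 else 0) + (if c2 then y1 else 0))
   - g *: ((if c1 then x2 else 0) + (if c2 then y2 else 0))
  = (if c1 then J *: x1 - g *: x2 else 0) + (if c2 then J *: y1 - g *: y2 else 0).
Proof.
case: c1; case: c2; rewrite ?addr0 ?add0r ?scaler0 ?subr0 //.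
by rewrite !scalerDr opprD addrACA.
Qed.

Lemma sumR (X : nat -> st) m : (m < M)%N ->
  \sum_(a : 'I_M) \sum_(b : 'I_M | val b == (val a).+1)
     (if val a == m then X (val b) else 0) = if (m.+1 < M)%N then X m.+1 else 0.
Proof.
move=> mM.
rewrite (eq_bigr (fun a : 'I_M => if val a == m then (if (m.+1 < M)%N then X m.+1 else 0) else 0)).
  rewrite -big_mkcond /=.
  by rewrite (sum_eqk (fun _ => if (m.+1 < M)%N then X m.+1 else 0)) mM.
move=> a _; case: eqP => [am | _]; last by rewrite big1.
by rewrite (sum_eqk X) am.
Qed.

Lemma sumL (Y : nat -> nat -> st) m : (m < M)%N ->
  \sum_(a : 'I_M) \sum_(b : 'I_M | val b == (val a).+1)
     (if val b == m then Y (val a) (val b) else 0) = if (0 < m)%N then Y m.-1 m else 0.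
Proof.
move=> mM.
rewrite (eq_bigr (fun a : 'I_M => if val a == m.-1 then (if (0 < m)%N then Y m.-1 m else 0) else 0)).
  rewrite -big_mkcond /=.
  by rewrite (sum_eqk (fun _ => if (0 < m)%N then Y m.-1 m else 0)) (leq_ltn_trans (leq_pred m) mM).
move=> a _.
rewrite (sum_eqk (fun k => if k == m then Y (val a) k else 0)).
case: (m =P (val a).+1) mM => [-> | h] mM /=.
  by rewrite mM !eqxx.
have -> : (if ((val a).+1 < M)%N then (if (val a).+1 == m then Y (val a) (val a).+1 else 0) else 0) = 0.
  by case: ifP => // _; case: eqP => // h2; rewrite h2 in h.
by case: eqP => // am; case: (m) h am => // n /= h am; rewrite am in h.
Qed.

Definition T (J g : C) (v : bool -> C) : bool -> C := fun x => J * sp v x - g * v x.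
Definition Td (J g : C) (v : bool -> C) : bool -> C := fun x => J * sm v x - g * v x.

Lemma Ham_P J g m f : (m < M)%N ->
  Ham J g (P m f) =
    (if (m.+1 < M)%N then J *: P m.+1 (upd f m.+1 (sp (f m.+1))) - g *: P m.+1 f else 0)
  + (if (0 < m)%N then J *: P m.-1 (upd f m (sm (f m))) - g *: P m.-1 f else 0).
Proof.
move=> mM; rewrite /Ham.
rewrite (eq_bigr (fun a : 'I_M => \sum_(b : 'I_M | val b == (val a).+1)
   ((if val a == m then J *: P (val b) (upd f (val b) (sp (f (val b)))) - g *: P (val b) f else 0)
  + (if val b == m then J *: P (val a) (upd f (val b) (sm (f (val b)))) - g *: P (val a) f else 0)))).
  under eq_bigr => a _ do rewrite big_split; rewrite big_split /= (sumR (fun k => J *: P k (upd f k (sp (f k))) - g *: P k f)) //.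
  by rewrite (sumL (fun k l => J *: P k (upd f l (sm (f l))) - g *: P k f)).
move=> a _; apply: eq_bigr => b _.
rewrite sigp_P !cc_P -split_if; congr (_ - _).
congr (_ *: (_ + _)); case: ifP => _; [exact: sigm_P | exact: sigm0].
Qed.

Lemma prod_upd (f : nat -> bool -> C) j (jM : (j < M)%N) v (s : {ffun 'I_M -> bool}) :
  \prod_(k < M | k != Ordinal jM) upd f j v (val k) (s k)
  = \prod_(k < M | k != Ordinal jM) f (val k) (s k).
Proof.
apply: eq_bigr => k kj; rewrite /upd.
by have -> : (val k == j) = false by apply/negbTE.
Qed.

Lemma prod_split (f : nat -> bool -> C) j (jM : (j < M)%N) (s : {ffun 'I_M -> bool}) :
  \prod_(k < M) f (val k) (s k)
  = f j (s (Ordinal jM)) * \prod_(k < M | k != Ordinal jM) f (val k) (s k).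
Proof. by rewrite (bigD1 (Ordinal jM)). Qed.

Lemma P_T J g k f j : (j < M)%N ->
  J *: P k (upd f j (sp (f j))) - g *: P k f = P k (upd f j (T J g (f j))).
Proof.
move=> jM; apply/ffunP => [[n s]]; rewrite !ffunE /=.
case: ifP => _; last by rewrite !scaler0 subrr.
rewrite (prod_split (upd f j _) jM) (prod_split f jM) (prod_split (upd f j (T J g _)) jM).
rewrite !prod_upd /upd eqxx /T.
by rewrite !scalerAl -mulrBl.
Qed.

Lemma P_Td J g k f j : (j < M)%N ->
  J *: P k (upd f j (sm (f j))) - g *: P k f = P k (upd f j (Td J g (f j))).
Proof.
move=> jM; apply/ffunP => [[n s]]; rewrite !ffunE /=.
case: ifP => _; last by rewrite !scaler0 subrr.
rewrite (prod_split (upd f j _) jM) (prod_split f jM) (prod_split (upd f j (Td J g _)) jM).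
rewrite !prod_upd /upd eqxx /Td.
by rewrite !scalerAl -mulrBl.
Qed.

Lemma P_eq k (f h : nat -> bool -> C) j0 c : (j0 < M)%N ->
  (forall j, (j < M)%N -> j != j0 -> f j =1 h j) ->
  f j0 =1 (fun x => c * h j0 x) -> P k f = c *: P k h.
Proof.
move=> jM Hj H0; apply/ffunP => [[n s]]; rewrite !ffunE /=.
case: ifP => _; last by rewrite scaler0.
rewrite (prod_split f jM) (prod_split h jM) H0 scalerAl; congr (_ * _).
by apply: eq_bigr => j jj; apply: Hj => //; apply: ltn_ord.
Qed.

Lemma reindex (psi l : nat -> C) (Q : nat -> st) N :
  \sum_(0 <= m < N) psi m *: ((if (m.+1 < N)%N then Q m.+1 else 0)
                              + (if (0 < m)%N then l m *: Q m.-1 else 0))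
  = \sum_(0 <= m < N) ((if (0 < m)%N then psi m.-1 else 0)
                       + (if (m.+1 < N)%N then l m.+1 * psi m.+1 else 0)) *: Q m.
Proof.
case: N => [|n]; first by rewrite !big_geq.
under eq_bigr => m _ do rewrite scalerDr.
under [RHS]eq_bigr => m _ do rewrite scalerDl.
rewrite !big_split /=; congr (_ + _).
  rewrite big_nat_recr //= ltnn scaler0 addr0 big_nat_recl //= scale0r add0r.
  by apply: eq_big_nat => m /andP [_ mn]; rewrite ltnS mn.
rewrite big_nat_recl //= scaler0 add0r big_nat_recr //= ltnn scale0r addr0.
apply: eq_big_nat => m /andP [_ mn]; rewrite ltnS mn scalerA.
by rewrite mulrC.
Qed.

Lemma sum_nz (r : seq nat) (G : nat -> C) :
  \sum_(m <- r) G m != 0 -> exists2 m, m \in r & G m != 0.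
Proof.
elim: r => [|a r IH]; first by rewrite big_nil eqxx.
rewrite big_cons; case: (eqVneq (G a) 0) => [-> | h].
  by rewrite add0r => /IH [m mr nz]; exists m => //; rewrite inE mr orbT.
by move=> _; exists a => //; rewrite inE eqxx.
Qed.

Definition Fn (gd : nat -> bool -> C) (X : st) : C :=
  \sum_(s : {ffun 'I_M -> bool}) X (delta 0, s) * \prod_(j < M) gd (val j) (s j).

Lemma FnD gd (x y : st) : Fn gd (x + y) = Fn gd x + Fn gd y.
Proof. by rewrite /Fn -big_split; apply: eq_bigr => s _; rewrite ffunE mulrDl. Qed.
Lemma FnZ gd c (x : st) : Fn gd (c *: x) = c * Fn gd x.
Proof. by rewrite /Fn mulr_sumr; apply: eq_bigr => s _; rewrite ffunE mulrA. Qed.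
Lemma Fn0 gd : Fn gd 0 = 0.
Proof. by have := FnZ gd 0 0; rewrite scale0r mul0r. Qed.
Lemma Fn_sum gd (I : Type) (r : seq I) (Pr : pred I) (F : I -> st) :
  Fn gd (\sum_(i <- r | Pr i) F i) = \sum_(i <- r | Pr i) Fn gd (F i).
Proof. exact: (big_morph _ (FnD gd) (Fn0 gd)). Qed.

Lemma Fn_P gd m f : (0 < M)%N ->
  Fn gd (P m f) = if m == 0%N then \prod_(j < M) \sum_(x : bool) f (val j) x * gd (val j) x else 0.
Proof.
move=> M0; rewrite /Fn; under eq_bigr => s _ do rewrite ffunE /=.
case: (eqVneq m 0%N) => [-> | m0].
  rewrite eqxx; under eq_bigr => s _ do rewrite -big_split /=.
  by rewrite (bigA_distr_bigA (fun (j : 'I_M) (x : bool) => f (val j) x * gd (val j) x)).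
apply: big1 => s _.
have -> : (delta 0 == delta m) = false.
  apply/negbTE/eqP => /(congr1 (fun h : {ffun 'I_M -> bool} => h (Ordinal M0))).
  rewrite /delta !ffunE /= eq_sym; case: eqP => // /esym.
  by move=> _ h; rewrite -h in m0.
exact: mul0r.
Qed.
End Gen.

Section Model.
Variables (C : numClosedFieldType) (Z : nat) (J g s : C).
Hypotheses (hs : s ^+ 2 = 4 * g ^+ 2 + J ^+ 2) (g0 : g != 0) (s0 : s != 0).
Local Notation M := (4 * Z + 3)%N.
Local Notation st := (state M C).

Definition E2 := 2 * g ^+ 2 + J ^+ 2.
Definition e (c : bool) : bool -> C := fun x => (x == c)%:R.
Definition lam (c : bool) : C := if c then (E2 + J * s) / 2 else (E2 - J * s) / 2.
Definition vv (c : bool) : bool -> C :=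
  fun x => if x then (if c then (J - s) / 2 else (J + s) / 2) else g.

Lemma two_nz : (2 : C) != 0. Proof. by rewrite pnatr_eq0. Qed.
Lemma four_nz : (4 : C) != 0. Proof. by rewrite pnatr_eq0. Qed.

Lemma lam_sum c : lam c + lam (~~ c) = E2.
Proof. have h2 := two_nz; case: c; rewrite /lam /=; by field. Qed.

Lemma lam_prod : lam true * lam false = g ^+ 4.
Proof.
have h2 := two_nz; have h4 := four_nz.
rewrite /lam /E2.
have -> : (2 * g ^+ 2 + J ^+ 2 + J * s) / 2 * ((2 * g ^+ 2 + J ^+ 2 - J * s) / 2)
   = ((2 * g ^+ 2 + J ^+ 2) ^+ 2 - J ^+ 2 * s ^+ 2) / 4 by field.
rewrite hs; by field.
Qed.

Lemma lam_nz c : lam c != 0.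
Proof.
have : lam true * lam false != 0 by rewrite lam_prod expf_neq0.
by rewrite mulf_eq0 negb_or => /andP [h1 h2]; case: c.
Qed.

Lemma eq_via (a b k : C) : a - b = k * (s ^+ 2 - (4 * g ^+ 2 + J ^+ 2)) -> a = b.
Proof. by rewrite hs subrr mulr0 => /eqP; rewrite subr_eq0 => /eqP. Qed.

Lemma eigen c x : Td J g (T J g (vv c)) x = lam c * vv c x.
Proof.
have h2 := two_nz; have h4 := four_nz.
rewrite /Td /T /sm /sp /vv /lam /E2.
case: c; case: x => /=.
- by apply: (@eq_via _ _ (J / 4)); field.
- by field.
- by apply: (@eq_via _ _ (J / 4)); field.
- by field.
Qed.

Definition ast (c : bool) (j : nat) : bool -> C :=
  if (j %% 4 == 0)%N then Td J g (e c) else if (j %% 4 == 3)%N then e c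
  else if (j %% 4 == 1)%N then vv c else vv (~~ c).
Definition bst (c : bool) (j : nat) : bool -> C :=
  if j == 0%N then e true else if (j %% 4 == 0)%N then e c else T J g (ast c j).
Definition tt (j : nat) : nat :=
  if (j %% 4 == 0)%N then (3 * (j %/ 4)).-1
  else if (j %% 4 == 3)%N then (3 * (j %/ 4)).+1 else (3 * (j %/ 4))%N.
Definition ch (i j : nat) : bool := odd (i %/ 2 ^ tt j).
Definition F (i m : nat) : nat -> bool -> C :=
  fun j => if (j <= m)%N then bst (ch i j) j else ast (ch i j) j.
Fixpoint xs (i k : nat) : C :=
  if k is k'.+1 then - xs i k' / lam (ch i (4 * k'.+1 + 1)) else 1.
Definition psi (i m : nat) : C :=
  if (m %% 4 == 0)%N then lam (ch i m.+1) * xs i (m %/ 4)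
  else if (m %% 4 == 2)%N then xs i (m %/ 4) else 0.
Definition phi (i m : nat) : C := if (m %% 4 == 1)%N then E2 * xs i (m %/ 4) else 0.
Definition lfc (c : bool) (m : nat) : C :=
  if (m %% 4 == 1)%N then lam c else if (m %% 4 == 2)%N then lam (~~ c) else 1.
Definition lf (i m : nat) : C := lfc (ch i m) m.
Definition Phi (i : nat) (ps : nat -> C) : st := \sum_(0 <= m < M) ps m *: P M m (F i m).
Definition Ach (i : nat) (ps : nat -> C) (m : nat) : C :=
  (if (0 < m)%N then ps m.-1 else 0) + (if (m.+1 < M)%N then lf i m.+1 * ps m.+1 else 0).

Lemma eig2 c m : (0 < m)%N -> (m %% 4 != 3)%N -> forall x,
  Td J g (bst c m) x = lfc c m * ast c m x.
Proof.
move=> m0 /eqP m3 x; rewrite /bst /ast /lfc.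
have -> : (m == 0%N) = false by apply/negbTE; rewrite -lt0n.
have : (m %% 4 = 0 \/ m %% 4 = 1 \/ m %% 4 = 2)%N by lia.
case=> [-> | [-> | ->]] /=.
- by rewrite mul1r.
- exact: eigen.
- exact: eigen.
Qed.

Lemma chain_step i m : (m < M)%N -> (m %% 4 != 3)%N ->
  Ham J g (P M m (F i m)) =
    (if (m.+1 < M)%N then P M m.+1 (F i m.+1) else 0)
  + (if (0 < m)%N then lf i m *: P M m.-1 (F i m.-1) else 0).
Proof.
move=> mM m3; rewrite Ham_P //; congr (_ + _); case: ifP => h //.
- rewrite P_T // -[P M m.+1 (F i m.+1)]scale1r; apply: (@P_eq _ _ _ _ _ m.+1) => //.
  + move=> j jM jn x; rewrite /upd (negbTE jn) /F.
    by rewrite [(j <= m.+1)%N]leq_eqVlt (negbTE jn).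
  + move=> x; rewrite /upd eqxx /F ltnn leqnn mul1r /bst /=.
    by have -> : (m.+1 %% 4 == 0)%N = false by apply/negbTE/eqP; move/eqP: m3; lia.
- rewrite P_Td //; apply: (@P_eq _ _ _ _ _ m) => //.
  + move=> j jM jn x; rewrite /upd (negbTE jn) /F.
    case: (m) h jn => // n _ jn /=.
    by rewrite [(j <= n.+1)%N]leq_eqVlt (negbTE jn).
  + move=> x; rewrite /upd eqxx /F leqnn.
    have -> : (m <= m.-1)%N = false by case: (m) h => // n _; rewrite ltnn.
    exact: eig2.
Qed.

Lemma HamPhi i ps : (forall m, (m < M)%N -> (m %% 4 = 3)%N -> ps m = 0) ->
  Ham J g (Phi i ps) = Phi i (Ach i ps).
Proof.
move=> Hps; rewrite /Phi Ham_sum.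
transitivity (\sum_(0 <= m < M) ps m *: ((if (m.+1 < M)%N then P M m.+1 (F i m.+1) else 0)
   + (if (0 < m)%N then lf i m *: P M m.-1 (F i m.-1) else 0))).
  apply: eq_big_nat => m /andP [_ mM]; rewrite HamZ.
  case: (eqVneq (m %% 4)%N 3%N) => h; first by rewrite Hps // !scale0r.
  by rewrite chain_step.
rewrite /Ach; exact: (reindex ps (lf i) (fun m => P M m (F i m))).
Qed.

Lemma Ach_psi i m : (m < M)%N -> Ach i (psi i) m = phi i m.
Proof.
move=> mM; rewrite /Ach /phi /psi /lf /lfc.
have : (m %% 4 = 0 \/ m %% 4 = 1 \/ m %% 4 = 2 \/ m %% 4 = 3)%N by lia.
case=> [h|[h|[h|h]]]; rewrite h /=.
- have h1 : (m.+1 %% 4 = 1)%N by lia.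
  rewrite h1 /=; case: ifP => m0; [have -> : (m.-1 %% 4 = 3)%N by lia|]; rewrite /=;
  by case: ifP => _; rewrite ?mulr0 ?addr0.
- have m0 : (0 < m)%N by lia.
  have h1 : (m.+1 %% 4 = 2)%N by lia.
  have h2 : (m.-1 %% 4 = 0)%N by lia.
  have h3 : (m.+1 < M)%N by lia.
  have d1 : (m.+1 %/ 4 = m %/ 4)%N by lia.
  have d2 : (m.-1 %/ 4 = m %/ 4)%N by lia.
  have ech : ch i m.+1 = ch i m by rewrite /ch /tt h h1 d1.
  rewrite m0 h1 h2 h3 /= d1 d2 prednK // ech.
  by rewrite -mulrDl lam_sum.
- have h1 : (m.+1 %% 4 = 3)%N by lia.
  have h2 : (m.-1 %% 4 = 1)%N by lia.
  have m0 : (0 < m)%N by lia.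
  by rewrite m0 h1 h2 /=; case: ifP => _; rewrite ?mulr0 ?addr0.
- have m0 : (0 < m)%N by lia.
  have h1 : (m.+1 %% 4 = 0)%N by lia.
  have h2 : (m.-1 %% 4 = 2)%N by lia.
  have h3 : (m.+1 < M)%N by lia.
  have d1 : (m.+1 %/ 4 = (m.-1 %/ 4).+1)%N by lia.
  rewrite m0 h1 h2 h3 /= d1 /=.
  have -> : (4 * (m.-1 %/ 4).+1 + 1 = m.+2)%N by lia.
  have := lam_nz (ch i m.+2) => hl.
  by rewrite mul1r; field.
Qed.

Lemma Ach_phi i m : (m < M)%N -> Ach i (phi i) m = E2 * psi i m.
Proof.
move=> mM; rewrite /Ach /phi /psi /lf /lfc.
have : (m %% 4 = 0 \/ m %% 4 = 1 \/ m %% 4 = 2 \/ m %% 4 = 3)%N by lia.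
case=> [h|[h|[h|h]]]; rewrite h /=.
- have h1 : (m.+1 %% 4 = 1)%N by lia.
  have h3 : (m.+1 < M)%N by lia.
  have d1 : (m.+1 %/ 4 = m %/ 4)%N by lia.
  rewrite h1 h3 /= d1.
  have -> : (if (0 < m)%N then (if (m.-1 %% 4 == 1)%N then E2 * xs i (m.-1 %/ 4) else 0) else 0) = 0.
    by case: ifP => // m0; have -> : (m.-1 %% 4 = 3)%N by lia.
  by rewrite add0r mulrCA.
- have m0 : (0 < m)%N by lia.
  have h1 : (m.+1 %% 4 = 2)%N by lia.
  have h2 : (m.-1 %% 4 = 0)%N by lia.
  by rewrite m0 h1 h2 /=; case: ifP => _; rewrite ?mulr0 ?addr0.
- have m0 : (0 < m)%N by lia.
  have h1 : (m.+1 %% 4 = 3)%N by lia.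
  have h2 : (m.-1 %% 4 = 1)%N by lia.
  have d2 : (m.-1 %/ 4 = m %/ 4)%N by lia.
  by rewrite m0 h1 h2 /= d2; case: ifP => _; rewrite ?mulr0 ?addr0.
- have m0 : (0 < m)%N by lia.
  have h1 : (m.+1 %% 4 = 0)%N by lia.
  have h2 : (m.-1 %% 4 = 2)%N by lia.
  by rewrite m0 h1 h2 /=; case: ifP => _; rewrite ?mulr0 ?addr0.
Qed.

Lemma H_psi i : Ham J g (Phi i (psi i)) = Phi i (phi i).
Proof.
rewrite HamPhi; last by move=> m _ h; rewrite /psi h.
by apply: eq_big_nat => m /andP [_ mM]; rewrite Ach_psi.
Qed.

Lemma H_phi i : Ham J g (Phi i (phi i)) = E2 *: Phi i (psi i).
Proof.
rewrite HamPhi; last by move=> m _ h; rewrite /phi h.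
rewrite /Phi scaler_sumr; apply: eq_big_nat => m /andP [_ mM].
by rewrite Ach_phi // scalerA.
Qed.

Definition det2 (p q : bool -> C) := p false * q true - p true * q false.
Definition dual (c : bool) (j : nat) : bool -> C := fun x =>
  (if c then (if x then - ast false j false else ast false j true)
   else (if x then ast true j false else - ast true j true))
  / det2 (ast true j) (ast false j).

Lemma dual_ok c c' j : det2 (ast true j) (ast false j) != 0 ->
  \sum_(x : bool) ast c' j x * dual c j x = (c == c')%:R.
Proof.
rewrite big_bool /dual /det2 => hd.
by case: c; case: c' => /=; field.
Qed.

Lemma det_nz j : (0 < j)%N -> det2 (ast true j) (ast false j) != 0.
Proof.
move=> j0; rewrite /det2 /ast.
have h2 := two_nz.
have : (j %% 4 = 0 \/ j %% 4 = 1 \/ j %% 4 = 2 \/ j %% 4 = 3)%N by lia.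
case=> [->|[->|[->|->]]] /=.
- rewrite /Td /sm /e /=.
  have -> : (J * 1%:R - g * 0%:R) * (J * 0 - g * 0%:R) - (J * 0 - g * 1%:R) * (J * 0 - g * 1%:R)
      = - g ^+ 2 by ring.
  by rewrite oppr_eq0 expf_neq0.
- rewrite /vv /=.
  have -> : g * ((J + s) / 2) - (J - s) / 2 * g = g * s by field.
  by rewrite mulf_neq0.
- rewrite /vv /=.
  have -> : g * ((J - s) / 2) - (J + s) / 2 * g = - (g * s) by field.
  by rewrite oppr_eq0 mulf_neq0.
- rewrite /e /=.
  have -> : (0%:R : C) * 0%:R - 1%:R * 1%:R = -1 by ring.
  by rewrite oppr_eq0 oner_eq0.
Qed.

Definition gd (i : nat) (j : nat) : bool -> C := if j == 0%N then e true else dual (ch i j) j.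

Lemma fac i i' j : (0 < j)%N ->
  \sum_(x : bool) F i' 0%N j x * gd i j x = (ch i j == ch i' j)%:R.
Proof.
move=> j0; rewrite /F /gd.
have -> : (j <= 0)%N = false by rewrite leqNgt j0.
have -> : (j == 0%N) = false by apply/negbTE; rewrite -lt0n.
by rewrite dual_ok // det_nz.
Qed.

Lemma fac0 i i' : \sum_(x : bool) F i' 0%N 0%N x * gd i 0%N x = 1.
Proof. by rewrite /F /gd /bst /= big_bool /e /=; ring. Qed.

Lemma M0 : (0 < M)%N. Proof. by rewrite addn3. Qed.

Lemma Fn_Phi i i' ps :
  Fn (gd i) (Phi i' ps) = ps 0%N * \prod_(j < M) \sum_(x : bool) F i' 0%N (val j) x * gd i (val j) x.
Proof.
rewrite /Phi Fn_sum.
under eq_bigr => m _ do rewrite FnZ Fn_P ?M0 //.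
rewrite addn3 big_nat_recl //= [X in _ + X]big1 ?addr0 // => m _.
by rewrite mulr0.
Qed.

Lemma prodF_same i : \prod_(j < M) \sum_(x : bool) F i 0%N (val j) x * gd i (val j) x = 1.
Proof.
apply: big1 => j _; case: (posnP (val j)) => [-> | jp]; first exact: fac0.
by rewrite fac // eqxx.
Qed.

Lemma prodF_diff i i' j0 : (0 < j0 < M)%N -> ch i j0 != ch i' j0 ->
  \prod_(j < M) \sum_(x : bool) F i' 0%N (val j) x * gd i (val j) x = 0.
Proof.
case/andP => j0p j0M hd.
rewrite (bigD1 (Ordinal j0M)) //= fac // (negbTE hd) mul0r //.
Qed.

Lemma bits_inj n a b : (a < 2 ^ n)%N -> (b < 2 ^ n)%N ->
  (forall t, (t < n)%N -> odd (a %/ 2 ^ t) = odd (b %/ 2 ^ t)) -> a = b.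
Proof.
elim: n a b => [|n IH] a b ha hb H.
  by rewrite expn0 in ha hb; lia.
have h0 := H 0%N isT; rewrite expn0 !divn1 in h0.
have hd : (a %/ 2 = b %/ 2)%N.
  apply: IH.
  - by rewrite ltn_divLR // -expnSr.
  - by rewrite ltn_divLR // -expnSr.
  move=> t tn; have := H t.+1 tn. rewrite expnS !divnMA. by []. 
by rewrite (divn_eq a 2) (divn_eq b 2) !modn2 h0 hd.
Qed.

Definition spin (t : nat) : nat :=
  if (t %% 3 == 0)%N then (4 * (t %/ 3) + 1)%N
  else if (t %% 3 == 1)%N then (4 * (t %/ 3) + 3)%N else (4 * (t %/ 3) + 4)%N.

Lemma spin_ok t : (t < 3 * Z + 1)%N -> (0 < spin t < M)%N /\ tt (spin t) = t.
Proof.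
move=> tZ; rewrite /spin /tt.
have : (t %% 3 = 0 \/ t %% 3 = 1 \/ t %% 3 = 2)%N by lia.
case=> [h|[h|h]]; rewrite h /=.
- have -> : ((4 * (t %/ 3) + 1) %% 4 = 1)%N by lia.
  have -> : ((4 * (t %/ 3) + 1) %/ 4 = t %/ 3)%N by lia.
  by rewrite /=; split; [apply/andP; split; lia | lia].
- have -> : ((4 * (t %/ 3) + 3) %% 4 = 3)%N by lia.
  have -> : ((4 * (t %/ 3) + 3) %/ 4 = t %/ 3)%N by lia.
  by rewrite /=; split; [apply/andP; split; lia | lia].
- have -> : ((4 * (t %/ 3) + 4) %% 4 = 0)%N by lia.
  have -> : ((4 * (t %/ 3) + 4) %/ 4 = (t %/ 3).+1)%N by lia.
  by rewrite /=; split; [apply/andP; split; lia | lia].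
Qed.

Lemma diff_spin i i' : (i < 2 ^ (3 * Z + 1))%N -> (i' < 2 ^ (3 * Z + 1))%N -> i != i' ->
  exists j0, (0 < j0 < M)%N /\ ch i j0 != ch i' j0.
Proof.
move=> hi hi' nii.
case: (boolP [forall t : 'I_(3 * Z + 1), odd (i %/ 2 ^ t) == odd (i' %/ 2 ^ t)]) => H.
  have : i = i'.
    apply: (bits_inj hi hi') => t tn.
    by move/forallP: H => /(_ (Ordinal tn)) /eqP.
  by move/eqP: nii.
move: H; rewrite negb_forall => /existsP [t ht].
have [h1 h2] := spin_ok (ltn_ord t).
by exists (spin t); split => //; rewrite /ch h2.
Qed.

Lemma sector i : in_sector (Phi i (psi i)).
Proof.
move=> b; rewrite /Phi sum_ffunE => /sum_nz [m]; rewrite mem_index_iota => /andP [_ mM].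
rewrite !ffunE /=; case: ifP => [/eqP hb | _]; last by rewrite scaler0 eqxx.
move=> nz.
have nzp : \prod_(j < M) F i m (val j) (b.2 j) != 0.
  by apply: contraNneq nz => ->; rewrite scaler0.
split.
  rewrite hb (_ : [set k : 'I_M | delta M m k] = [set Ordinal mM]) ?cards1 //.
  by apply/setP => k; rewrite !inE /delta ffunE.
move=> k k0; move/prodf_neq0: nzp => /(_ k isT).
have k0' : val k = 0%N := k0.
rewrite /F k0' leq0n /bst /e /=; by case: (b.2 k); rewrite /= ?eqxx.
Qed.

Fixpoint ab (n : nat) : C * C :=
  if n is n'.+1 then ((ab n').2 * E2, (ab n').1) else (1, 0).

Lemma iterH i n : iter n (Ham J g) (Phi i (psi i))
  = (ab n).1 *: Phi i (psi i) + (ab n).2 *: Phi i (phi i).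
Proof.
elim: n => [|n IH] /=; first by rewrite scale1r scale0r addr0.
by rewrite IH HamD !HamZ H_psi H_phi scalerA addrC.
Qed.

Lemma Fn_psi i : Fn (gd i) (Phi i (psi i)) = lam (ch i 1).
Proof. by rewrite Fn_Phi prodF_same mulr1 /psi /= mulr1. Qed.

Lemma Fn_phi i : Fn (gd i) (Phi i (phi i)) = 0.
Proof. by rewrite Fn_Phi /phi /= mul0r. Qed.

Lemma kry i : E2 != 0 -> krylov_dim2 (Ham J g) (Phi i (psi i)).
Proof.
move=> E0.
exists (Phi i (psi i)), (Phi i (phi i)); split.
- exists 1%N, (fun _ => 1); by rewrite big_ord1 /= scale1r.
- exists 2%N, (fun n : 'I_2 => (val n == 1%N)%:R).
  by rewrite big_ord_recr big_ord1 /= scale0r add0r scale1r H_psi.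
- move=> a b0 hab.
  have := congr1 (Fn (gd i)) hab; rewrite FnD !FnZ Fn_psi Fn_phi Fn0 mulr0 addr0.
  move/eqP; rewrite mulf_eq0 (negbTE (lam_nz _)) orbF => /eqP a0.
  split => //; move: hab; rewrite a0 scale0r add0r => /eqP.
  rewrite scaler_eq0 => /orP [/eqP // | /eqP h].
  have := congr1 (Ham J g) h; rewrite H_phi Ham0 => /eqP.
  rewrite scaler_eq0 (negbTE E0) /= => /eqP h2.
  by have := Fn_psi i; rewrite h2 Fn0 => /esym/eqP; rewrite (negbTE (lam_nz _)).
- move=> w [N [a ->]].
  exists (\sum_(n < N) a n * (ab n).1), (\sum_(n < N) a n * (ab n).2).
  rewrite !scaler_suml -big_split /=; apply: eq_bigr => n _.
  by rewrite iterH scalerDr !scalerA.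
Qed.

Lemma lin_ind (N : nat) : (N <= 2 ^ (3 * Z + 1))%N ->
  lin_indep (fun k : 'I_N => Phi k (psi k)).
Proof.
move=> hN a ha i0.
have := congr1 (Fn (gd i0)) ha; rewrite Fn_sum Fn0 (bigD1 i0) //= FnZ Fn_psi.
rewrite big1 ?addr0.
  by move/eqP; rewrite mulf_eq0 (negbTE (lam_nz _)) orbF => /eqP.
move=> k kn; rewrite FnZ Fn_Phi.
have hi0 : (i0 < 2 ^ (3 * Z + 1))%N := leq_trans (ltn_ord i0) hN.
have hk : (k < 2 ^ (3 * Z + 1))%N := leq_trans (ltn_ord k) hN.
have kn' : (val i0 != val k) by rewrite eq_sym.
have [j0 [hj hd]] := diff_spin hi0 hk kn'.
by rewrite (prodF_diff hj hd) !mulr0.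
Qed.

Lemma final_model : E2 != 0 ->
  exists Psi : 'I_(2 ^ (3 * Z + 1)) -> state M C,
    lin_indep Psi /\
    forall i,
      [/\ in_sector (Psi i),
          Ham J g (Ham J g (Psi i)) = E2 *: Psi i
        & krylov_dim2 (Ham J g) (Psi i)].
Proof.
move=> E0; exists (fun i => Phi i (psi i)); split; first exact: lin_ind.
move=> i; split; [exact: sector | by rewrite H_psi H_phi | exact: kry].
Qed.
End Model.

Theorem mainTheorem3 (C : numClosedFieldType) (Z : nat) (J gamma : C) :
  (1 <= Z)%N -> J \is Num.real -> gamma \is Num.real -> gamma != 0 ->
  exists Psi : 'I_(2 ^ (3 * Z + 1)) -> state (4 * Z + 3) C,
    lin_indep Psi /\
    forall i,
      [/\ in_sector (Psi i),
          Ham J gamma (Ham J gamma (Psi i)) = (2 * gamma ^+ 2 + J ^+ 2) *: Psi i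
        & krylov_dim2 (Ham J gamma) (Psi i)].
Proof.
move=> _ Jr gr g0.
have gp : 0 < gamma ^+ 2 by rewrite real_exprn_even_gt0 // g0 orbT.
have Jp : 0 <= J ^+ 2 by rewrite real_exprn_even_ge0.
have D0 : 4 * gamma ^+ 2 + J ^+ 2 != 0.
  by apply: lt0r_neq0; apply: ltr_wpDr => //; apply: mulr_gt0.
have E0 : E2 J gamma != 0.
  by rewrite /E2; apply: lt0r_neq0; apply: ltr_wpDr => //; apply: mulr_gt0.
have hs : sqrtC (4 * gamma ^+ 2 + J ^+ 2) ^+ 2 = 4 * gamma ^+ 2 + J ^+ 2 := sqrtCK _.
have s0 : sqrtC (4 * gamma ^+ 2 + J ^+ 2) != 0 by rewrite sqrtC_eq0.
exact: (final_model Z hs g0 s0 E0).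
Qed.
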